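(* Let $\alpha\in[0,1)$ be irrational and $f(x)=\{x\}-\tfrac12$. There exist absolute constants $A_0,C>0$ such that for every $K$ with $a_K\ge A_0$ and every integer $0\le b\le a_K$, $$\Big|S_{bq_{K-1}}(f,\alpha)-(-1)^K\frac b2\Big(1-\frac b{a_K}\Big)\Big|\le C.$$
   Context: $\alpha=[0;a_1,a_2,\dots]$ is the continued fraction expansion with convergent denominators $q_0=1,q_1=a_1,q_{k+1}=a_{k+1}q_k+q_{k-1}$. $\{x\}$ is the fractional part. $S_N(f,\alpha):=\sum_{n=1}^N f(n\alpha)-N\int_0^1f(x)\,dx$. *)

(* Defs.v *)
From Stdlib Require Import Reals Lra Lia ZArith.
From Coquelicot Require Import Coquelicot.
Open Scope R_scope.

(* fractional part {x} = x - floor x (Stdlib's frac_part, Int_part = floor) *)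
Definition fracR (x : R) : R := frac_part x.

Definition saw (x : R) : R := fracR x - / 2.

Fixpoint cf_rem (alpha : R) (k : nat) : R :=
  match k with
  | O => alpha
  | S k' => fracR (/ cf_rem alpha k')
  end.

(* Partial quotients: alpha = [0; a_1, a_2, ...], a_{k+1} = floor (1/x_k);
   a_0 = 0 (alpha in [0,1)). *)
Definition cf_a (alpha : R) (k : nat) : nat :=
  match k with
  | O => O
  | S k' => Z.to_nat (Int_part (/ cf_rem alpha k'))
  end.

(* cf_qpair alpha k = (q_{k-1}, q_k), with q_{-1} = 0, q_0 = 1,
   q_{k+1} = a_{k+1} q_k + q_{k-1} (so q_1 = a_1). *)
Fixpoint cf_qpair (alpha : R) (k : nat) : nat * nat :=
  match k with
  | O => (O, 1%nat)
  | S k' => let (p, q) := cf_qpair alpha k' in (q, (cf_a alpha k * q + p)%nat)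
  end.

Definition cf_q (alpha : R) (k : nat) : nat := snd (cf_qpair alpha k).

Fixpoint birk_sum (f : R -> R) (alpha : R) (N : nat) : R :=
  match N with
  | O => 0
  | S N' => birk_sum f alpha N' + f (INR N * alpha)
  end.

Definition S_N (N : nat) (f : R -> R) (alpha : R) : R :=
  birk_sum f alpha N - INR N * RInt f 0 1.

Definition irrational (x : R) : Prop :=
  ~ exists (p q : Z), q <> 0%Z /\ x = IZR p / IZR q.

(* Main.v *)
Require Import Defs.
From Stdlib Require Import Reals Lra Lia ZArith.
From Coquelicot Require Import Coquelicot.
Open Scope R_scope.

Lemma Int_part_unique x z : IZR z <= x < IZR z + 1 -> Int_part x = z.
Proof.
  intros [H1 H2]. unfold Int_part.
  rewrite <- (tech_up x (z+1)); [lia| rewrite plus_IZR; lra | rewrite plus_IZR; lra].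
Qed.

Lemma RInt_saw : RInt saw 0 1 = 0.
Proof.
  apply is_RInt_unique.
  apply (is_RInt_ext (fun x => x - / 2)).
  { intros x Hx. rewrite Rmin_left in Hx by lra. rewrite Rmax_right in Hx by lra.
    unfold saw, fracR, frac_part. rewrite (Int_part_unique x 0); simpl; lra. }
  assert (H : is_RInt (fun x => x - /2) 0 1 (minus ((fun x => x*x/2 - x/2) 1) ((fun x => x*x/2 - x/2) 0))).
  { apply (is_RInt_derive (fun x => x*x/2 - x/2) (fun x => x - /2)).
    - intros x _. auto_derive; auto. field.
    - intros x _. apply continuity_pt_filterlim. apply continuity_pt_minus; [apply continuity_pt_id|apply continuity_pt_const; intros ? ?; reflexivity]. }
  replace (minus _ _) with 0 in H; auto.
  unfold minus, plus, opp; simpl. field.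
Qed.

Lemma irr_ne0 x : irrational x -> x <> 0.
Proof. intros H E. apply H. exists 0%Z, 1%Z. split; [lia|]. rewrite E. simpl. field. Qed.

Lemma irr_inv x : irrational x -> irrational (/ x).
Proof.
  intros H [p [q [Hq E]]]. apply H.
  assert (Hx := irr_ne0 x H).
  assert (Hp : p <> 0%Z).
  { intro Hp. subst p. assert (/x <> 0) by (apply Rinv_neq_0_compat; auto).
    apply H0. rewrite E. simpl. unfold Rdiv. ring. }
  exists q, p. split; auto.
  assert (IZR p <> 0) by (apply not_0_IZR; auto).
  assert (IZR q <> 0) by (apply not_0_IZR; auto).
  rewrite <- (Rinv_inv x). rewrite E. field. auto.
Qed.

Lemma irr_sub x z : irrational x -> irrational (x - IZR z).
Proof.
  intros H [p [q [Hq E]]]. apply H. exists (p + z*q)%Z, q. split; auto.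
  assert (IZR q <> 0) by (apply not_0_IZR; auto).
  rewrite plus_IZR, mult_IZR. replace x with ((x - IZR z) + IZR z) by ring.
  rewrite E. field. auto.
Qed.

Lemma rem_props alpha : 0 <= alpha < 1 -> irrational alpha ->
  forall k, 0 < cf_rem alpha k < 1 /\ irrational (cf_rem alpha k).
Proof.
  intros Ha Hi. induction k as [|k [Hb Hk]].
  - simpl. split; auto. assert (alpha <> 0) by (apply irr_ne0; auto). lra.
  - simpl. unfold fracR, frac_part.
    assert (Hi2 : irrational (/ cf_rem alpha k - IZR (Int_part (/ cf_rem alpha k))))
      by (apply irr_sub, irr_inv; auto).
    split; auto.
    pose proof (base_fp (/ cf_rem alpha k)). unfold frac_part in H.
    pose proof (irr_ne0 _ Hi2). lra.
Qed.

Lemma a_props alpha k : 0 <= alpha < 1 -> irrational alpha ->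
  (1 <= cf_a alpha (S k))%nat /\
  / cf_rem alpha k = INR (cf_a alpha (S k)) + cf_rem alpha (S k).
Proof.
  intros Ha Hi. destruct (rem_props alpha Ha Hi k) as [[H0 H1] _].
  assert (Hinv : / cf_rem alpha k > 1).
  { rewrite <- Rinv_1. apply Rinv_lt_contravar; lra. }
  pose proof (base_Int_part (/ cf_rem alpha k)) as [B1 B2].
  assert (Hz : (1 <= Int_part (/ cf_rem alpha k))%Z).
  { apply le_IZR. assert (IZR (Int_part (/ cf_rem alpha k)) > 0) by lra.
    apply lt_IZR in H. apply IZR_le. lia. }
  simpl cf_a. split; [lia|].
  rewrite INR_IZR_INZ, Z2Nat.id by lia. simpl. unfold fracR, frac_part. ring.
Qed.

Fixpoint cf_ppair (alpha:R) (k:nat) : Z*Z :=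
  match k with
  | O => (1%Z, 0%Z)
  | S k' => let (pm, p) := cf_ppair alpha k' in (p, (Z.of_nat (cf_a alpha k) * p + pm)%Z)
  end.

Lemma qpair_S alpha k : cf_qpair alpha (S k) =
  (snd (cf_qpair alpha k), (cf_a alpha (S k) * snd (cf_qpair alpha k) + fst (cf_qpair alpha k))%nat).
Proof. simpl. destruct (cf_qpair alpha k); reflexivity. Qed.

Lemma ppair_S alpha k : cf_ppair alpha (S k) =
  (snd (cf_ppair alpha k), (Z.of_nat (cf_a alpha (S k)) * snd (cf_ppair alpha k) + fst (cf_ppair alpha k))%Z).
Proof. simpl. destruct (cf_ppair alpha k); reflexivity. Qed.

Lemma pow_m1 k : (-1)^k = 1 \/ (-1)^k = -1.
Proof. induction k; simpl; [left; auto| destruct IHk as [H|H]; rewrite H; [right|left]; ring]. Qed.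

Lemma cf_ident alpha : 0 <= alpha < 1 -> irrational alpha -> forall k,
  let Qm := fst (cf_qpair alpha k) in let Q := snd (cf_qpair alpha k) in
  let Pm := fst (cf_ppair alpha k) in let P := snd (cf_ppair alpha k) in
  let x := cf_rem alpha k in
  alpha * (INR Q + x * INR Qm) = IZR P + x * IZR Pm /\
  IZR (Z.of_nat Q * Pm - P * Z.of_nat Qm) = (-1)^k /\
  (1 <= Q)%nat /\ (Qm <= Q)%nat.
Proof.
  intros Ha Hi k. induction k as [|k IH].
  - simpl. repeat split; try lia; try ring.
  - rewrite qpair_S, ppair_S. simpl fst; simpl snd. simpl in IH.
    set (Qm := fst (cf_qpair alpha k)) in *. set (Q := snd (cf_qpair alpha k)) in *.
    set (Pm := fst (cf_ppair alpha k)) in *. set (P := snd (cf_ppair alpha k)) in *.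
    destruct IH as [E1 [E2 [E3 E4]]].
    destruct (a_props alpha k Ha Hi) as [Ha1 Hinv].
    destruct (rem_props alpha Ha Hi k) as [[X0 X1] _].
    set (a := cf_a alpha (S k)) in *. set (x' := cf_rem alpha (S k)) in *.
    set (x := cf_rem alpha k) in *.
    change (Z.to_nat (Int_part (/ x))) with a in *.
    assert (Ext : x * (INR a + x') = 1) by (rewrite <- Hinv; field; lra).
    repeat split.
    + rewrite plus_INR, mult_INR, plus_IZR, mult_IZR, <- INR_IZR_INZ.
      set (t := INR a + x') in *.
      assert (alpha * (INR a * INR Q + INR Qm + x' * INR Q) - t * (alpha * (INR Q + x * INR Qm)) = alpha * INR Qm * (1 - x * t)) by (unfold t; ring).
      assert (INR a * IZR P + IZR Pm + x' * IZR P - t * (IZR P + x * IZR Pm) = IZR Pm * (1 - x*t)) by (unfold t; ring).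
      rewrite Ext in H, H0. rewrite E1 in H. lra.
    + assert (Z.of_nat (a * Q + Qm) * P - (Z.of_nat a * P + Pm) * Z.of_nat Q = - (Z.of_nat Q * Pm - P * Z.of_nat Qm))%Z
        by (rewrite Nat2Z.inj_add, Nat2Z.inj_mul; ring).
      rewrite H, opp_IZR, E2. simpl. ring.
    + nia.
    + nia.
Qed.

Fixpoint IS alpha N : Z :=
  match N with O => 0%Z | S N' => (IS alpha N' + Int_part (INR N * alpha))%Z end.

Lemma IS_S alpha N : IS alpha (S N) = (IS alpha N + Int_part (INR (S N) * alpha))%Z.
Proof. reflexivity. Qed.

Fixpoint sumZ (f : nat -> Z) n : Z :=
  match n with O => 0%Z | S n' => (sumZ f n' + f n)%Z end.

Lemma birk_IS alpha N : birk_sum saw alpha N =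
  alpha * INR N * (INR N + 1) / 2 - INR N / 2 - IZR (IS alpha N).
Proof.
  induction N as [|N IH].
  - simpl. field.
  - change (birk_sum saw alpha (S N)) with (birk_sum saw alpha N + saw (INR (S N) * alpha)).
    rewrite IH, IS_S. unfold saw, fracR, frac_part. rewrite plus_IZR, S_INR. field.
Qed.

Lemma sumZ_ext f g n : (forall i, (1 <= i <= n)%nat -> f i = g i) -> sumZ f n = sumZ g n.
Proof.
  induction n; intros H; simpl; auto.
  rewrite IHn by (intros; apply H; lia). rewrite H by lia. reflexivity.
Qed.

Lemma sumZ_add f g n : (sumZ (fun i => f i + g i) n = sumZ f n + sumZ g n)%Z.
Proof. induction n; simpl; lia. Qed.

Lemma sumZ_const c n : sumZ (fun _ => c) n = (Z.of_nat n * c)%Z.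
Proof. induction n; simpl sumZ; [reflexivity|]. rewrite IHn, Nat2Z.inj_succ. ring. Qed.

Lemma sumZ_shift f n : sumZ f (S n) = (f 1%nat + sumZ (fun i => f (S i)) n)%Z.
Proof.
  induction n.
  - simpl. ring.
  - change (sumZ f (S (S n))) with (sumZ f (S n) + f (S (S n)))%Z.
    rewrite IHn. simpl. ring.
Qed.

Lemma sumZ_rev n : forall f, sumZ f n = sumZ (fun i => f (n + 1 - i)%nat) n.
Proof.
  induction n; intros f; [reflexivity|].
  rewrite (sumZ_shift (fun i => f (S n + 1 - i)%nat)).
  change (sumZ f (S n)) with (sumZ f n + f (S n))%Z.
  rewrite (IHn f).
  replace (f (S n + 1 - 1)%nat) with (f (S n)) by (f_equal; lia).
  rewrite Z.add_comm; reflexivity.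
Qed.

Definition Dq (p : Z) (q : nat) (i : nat) : Z := ((Z.of_nat i * p) / Z.of_nat q)%Z.

Lemma divmod_facts (p : Z) (q n : nat) :
  (1 <= q)%nat ->
  (forall n t, (0 < n < Z.of_nat q)%Z -> (n*p <> t * Z.of_nat q)%Z) ->
  (1 <= n <= q-1)%nat ->
  exists r, (Z.of_nat n * p = Z.of_nat q * Dq p q n + r)%Z /\ (1 <= r <= Z.of_nat q - 1)%Z.
Proof.
  intros Hq Hnd Hn. unfold Dq.
  exists ((Z.of_nat n * p) mod Z.of_nat q)%Z. split.
  - apply Z_div_mod_eq_full.
  - pose proof (Z.mod_pos_bound (Z.of_nat n * p) (Z.of_nat q) ltac:(lia)).
    assert ((Z.of_nat n * p) mod Z.of_nat q <> 0)%Z.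
    { intro E. pose proof (Z_div_mod_eq_full (Z.of_nat n * p) (Z.of_nat q)).
      rewrite E in H0. apply (Hnd (Z.of_nat n) ((Z.of_nat n * p) / Z.of_nat q)%Z); lia. }
    lia.
Qed.

Lemma pair_D p q n :
  (1 <= q)%nat ->
  (forall n t, (0 < n < Z.of_nat q)%Z -> (n*p <> t * Z.of_nat q)%Z) ->
  (1 <= n <= q-1)%nat ->
  (Dq p q n + Dq p q (q - n) = p - 1)%Z.
Proof.
  intros Hq Hnd Hn.
  destruct (divmod_facts p q n Hq Hnd Hn) as [r [E Hr]].
  assert (Dq p q (q-n) = p - Dq p q n - 1)%Z; [|lia].
  unfold Dq at 1. symmetry. apply (Z.div_unique _ _ _ (Z.of_nat q - r)).
  - left. lia.
  - rewrite Nat2Z.inj_sub by lia. rewrite Z.mul_sub_distr_r, E. ring.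
Qed.

Lemma sum_D p q :
  (1 <= q)%nat ->
  (forall n t, (0 < n < Z.of_nat q)%Z -> (n*p <> t * Z.of_nat q)%Z) ->
  (2 * sumZ (Dq p q) (q - 1) = (Z.of_nat q - 1) * (p - 1))%Z.
Proof.
  intros Hq Hnd.
  replace (2 * sumZ (Dq p q) (q - 1))%Z with
    (sumZ (Dq p q) (q - 1) + sumZ (fun i => Dq p q (q - 1 + 1 - i)%nat) (q - 1))%Z
    by (rewrite <- sumZ_rev; ring).
  rewrite <- sumZ_add.
  rewrite (sumZ_ext _ (fun _ => p - 1)%Z).
  - rewrite sumZ_const, Nat2Z.inj_sub by lia. simpl. ring.
  - intros i Hi. replace (q - 1 + 1 - i)%nat with (q - i)%nat by lia.
    apply pair_D; auto.
Qed.

Lemma pt_a alpha p q b delta j n :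
  (1 <= q)%nat -> delta = INR q * alpha - IZR p -> INR b * INR q * Rabs delta < 1 ->
  (forall n t, (0 < n < Z.of_nat q)%Z -> (n*p <> t * Z.of_nat q)%Z) ->
  (1 <= n <= q-1)%nat -> (j*q+n <= b*q)%nat ->
  Int_part (INR (j*q+n) * alpha) = (Z.of_nat j * p + Dq p q n)%Z.
Proof.
  intros Hq Hd Hb Hnd Hn Hm.
  destruct (divmod_facts p q n Hq Hnd Hn) as [r [E Hr]].
  assert (HER : INR n * IZR p = INR q * IZR (Dq p q n) + IZR r).
  { rewrite !INR_IZR_INZ, <- !mult_IZR, <- plus_IZR. f_equal. exact E. }
  assert (Hr1 : 1 <= IZR r) by (apply IZR_le; lia).
  assert (Hr2 : IZR r <= INR q - 1).
  { rewrite INR_IZR_INZ. rewrite <- minus_IZR. apply IZR_le. lia. }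
  assert (Hq0 : 1 <= INR q) by (apply (le_INR 1); lia).
  assert (HmR : INR (j*q+n) <= INR b * INR q) by (rewrite <- mult_INR; apply le_INR; lia).
  assert (Hm0 : 0 <= INR (j*q+n)) by apply pos_INR.
  assert (Hmd : Rabs (INR (j*q+n) * delta) < 1).
  { rewrite Rabs_mult, (Rabs_pos_eq (INR _)) by auto.
    pose proof (Rabs_pos delta). nra. }
  apply Rabs_def2 in Hmd.
  set (m := INR (j*q+n)) in *.
  assert (Hm' : m = INR j * INR q + INR n) by (unfold m; rewrite plus_INR, mult_INR; ring).
  assert (key : INR q * (m * alpha) = INR q * IZR (Z.of_nat j * p + Dq p q n) + (m * delta + IZR r)).
  { rewrite plus_IZR, mult_IZR, <- INR_IZR_INZ. rewrite Hd, Hm'.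
    replace (IZR r) with (INR n * IZR p - INR q * IZR (Dq p q n)) by lra. ring. }
  apply Int_part_unique. nra.
Qed.

Lemma pt_b alpha p q b delta j :
  (1 <= q)%nat -> delta = INR q * alpha - IZR p -> INR b * INR q * Rabs delta < 1 ->
  (S j <= b)%nat ->
  Int_part (INR (S j * q) * alpha) =
    (Z.of_nat (S j) * p - (if Rlt_dec delta 0 then 1 else 0))%Z.
Proof.
  intros Hq Hd Hb Hj.
  assert (Hq0 : 1 <= INR q) by (apply (le_INR 1); lia).
  assert (Hj0 : 1 <= INR (S j)) by (apply (le_INR 1); lia).
  assert (Hjb : INR (S j) <= INR b) by (apply le_INR; lia).
  pose proof (Rabs_pos delta).
  assert (Hjd : INR (S j) * Rabs delta < 1).
  { assert (0 <= (INR b - INR (S j)) * Rabs delta) by (apply Rmult_le_pos; lra).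
    assert (0 <= INR b * Rabs delta * (INR q - 1)) by (apply Rmult_le_pos; [apply Rmult_le_pos; [apply pos_INR|lra]|lra]).
    nra. }
  assert (key : INR (S j * q) * alpha = IZR (Z.of_nat (S j) * p) + INR (S j) * delta).
  { rewrite mult_INR, mult_IZR, <- INR_IZR_INZ, Hd. ring. }
  rewrite key. apply Int_part_unique.
  destruct (Rlt_dec delta 0) as [Hn|Hn].
  - rewrite Rabs_left in Hjd by lra. rewrite minus_IZR. change (IZR 1) with 1. assert (INR (S j) * delta < 0) by (apply Rmult_pos_neg; lra). lra.
  - rewrite Rabs_pos_eq in Hjd by lra. rewrite Z.sub_0_r. assert (0 <= INR (S j) * delta) by (apply Rmult_le_pos; lra). lra.
Qed.

Lemma blockn alpha p q b delta j n :
  (1 <= q)%nat -> delta = INR q * alpha - IZR p -> INR b * INR q * Rabs delta < 1 ->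
  (forall n t, (0 < n < Z.of_nat q)%Z -> (n*p <> t * Z.of_nat q)%Z) ->
  (n <= q-1)%nat -> (j < b)%nat ->
  IS alpha (j*q + n) = (IS alpha (j*q) + Z.of_nat n * Z.of_nat j * p + sumZ (Dq p q) n)%Z.
Proof.
  intros Hq Hd Hb Hnd Hn Hj. induction n as [|n IH].
  - rewrite Nat.add_0_r. simpl. ring.
  - rewrite Nat.add_succ_r, IS_S, IH by lia.
    replace (S (j*q+n)) with (j*q + S n)%nat by lia.
    rewrite (pt_a alpha p q b delta j (S n)); auto; try lia.
    2:{ assert (j*q + q <= b*q)%nat by (replace (j*q+q)%nat with (S j * q)%nat by lia; apply Nat.mul_le_mono_r; lia). lia. }
    change (sumZ (Dq p q) (S n)) with (sumZ (Dq p q) n + Dq p q (S n))%Z.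
    rewrite Nat2Z.inj_succ. ring.
Qed.

Lemma block alpha p q b delta j :
  (1 <= q)%nat -> delta = INR q * alpha - IZR p -> INR b * INR q * Rabs delta < 1 ->
  (forall n t, (0 < n < Z.of_nat q)%Z -> (n*p <> t * Z.of_nat q)%Z) ->
  (j < b)%nat ->
  IS alpha (S j * q) = (IS alpha (j*q) + (Z.of_nat q - 1) * Z.of_nat j * p + sumZ (Dq p q) (q-1)
     + Z.of_nat (S j) * p - (if Rlt_dec delta 0 then 1 else 0))%Z.
Proof.
  intros Hq Hd Hb Hnd Hj.
  replace (S j * q)%nat with (S (j*q + (q-1)))%nat at 1 by lia.
  rewrite IS_S, (blockn alpha p q b delta j (q-1)) by (auto; lia).
  replace (S (j*q + (q-1)))%nat with (S j * q)%nat by lia.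
  rewrite (pt_b alpha p q b delta j) by (auto; lia).
  rewrite Nat2Z.inj_sub by lia. simpl Z.of_nat. ring.
Qed.

Lemma IS_total alpha p q b delta :
  (1 <= q)%nat -> delta = INR q * alpha - IZR p -> INR b * INR q * Rabs delta < 1 ->
  (forall n t, (0 < n < Z.of_nat q)%Z -> (n*p <> t * Z.of_nat q)%Z) ->
  forall j, (j <= b)%nat ->
  (2 * IS alpha (j * q) = Z.of_nat q * p * Z.of_nat j * (Z.of_nat j - 1)
     + Z.of_nat j * (2 * p + (Z.of_nat q - 1) * (p - 1) - 2 * (if Rlt_dec delta 0 then 1 else 0)))%Z.
Proof.
  intros Hq Hd Hb Hnd. induction j as [|j IH]; intros Hj.
  - simpl. ring.
  - rewrite (block alpha p q b delta j) by (auto; lia).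
    pose proof (sum_D p q Hq Hnd).
    specialize (IH ltac:(lia)).
    rewrite Nat2Z.inj_succ.
    set (c := if Rlt_dec delta 0 then 1%Z else 0%Z) in *.
    rewrite ?Z.mul_sub_distr_l, ?Z.mul_add_distr_l, IH, H. ring.
Qed.

Lemma core alpha p q b delta :
  (1 <= q)%nat -> delta = INR q * alpha - IZR p -> INR b * INR q * Rabs delta < 1 ->
  (forall n t, (0 < n < Z.of_nat q)%Z -> (n*p <> t * Z.of_nat q)%Z) ->
  birk_sum saw alpha (b * q) =
    delta * INR b * (INR b * INR q + 1) / 2 - INR b / 2
    + INR b * IZR (if Rlt_dec delta 0 then 1 else 0).
Proof.
  intros Hq Hd Hb Hnd.
  pose proof (IS_total alpha p q b delta Hq Hd Hb Hnd b (le_n b)) as H.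
  rewrite birk_IS.
  set (c := if Rlt_dec delta 0 then 1%Z else 0%Z) in *.
  assert (E : IZR (IS alpha (b*q)) = IZR (2 * IS alpha (b * q)) / 2) by (rewrite mult_IZR; field).
  rewrite E, H. clear E H.
  rewrite ?plus_IZR, ?mult_IZR, ?minus_IZR, ?plus_IZR, ?mult_IZR, ?minus_IZR, ?plus_IZR, ?mult_IZR, ?minus_IZR.
  rewrite <- !INR_IZR_INZ. rewrite mult_INR.
  assert (Hq0 : INR q <> 0) by (apply not_0_INR; lia).
  assert (alpha = (delta + IZR p) / INR q) by (rewrite Hd; field; auto).
  rewrite H. field. auto.
Qed.

Lemma final_bound (a b Q Qm x' M : R) : 1 <= a -> 0 <= b <= a -> 1 <= Q -> 0 <= Qm <= Q ->
  0 < x' < 1 -> M = (a + x') * Q + Qm ->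
  Rabs (b * (b * (a * Q - M) + a) / (2 * a * M)) <= 2.
Proof.
  intros Ha Hb HQ HQm Hx HM.
  assert (HM1 : a * Q <= M) by nra.
  assert (HM0 : a <= M) by nra.
  set (num := b * (b * (a * Q - M) + a)).
  assert (Hn1 : num <= 4 * a * M).
  { unfold num. assert (b * (a*Q - M) <= 0) by nra. nra. }
  assert (Hn2 : - (4 * a * M) <= num).
  { unfold num. assert (- 2 * Q <= a*Q - M) by nra.
    assert (b * (a*Q - M) >= - 2 * b * Q) by nra.
    assert (b * b * Q <= a * a * Q) by (apply Rmult_le_compat_r; nra).
    assert (a * a * Q <= a * M) by nra.
    nra. }
  set (d := 2 * a * M).
  assert (Hd : d > 0) by (unfold d; nra).
  set (w := num / d).
  assert (Hw : num = w * d) by (unfold w; field; lra).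
  apply Rabs_le. split.
  - apply (Rmult_le_reg_r d); [lra|]. rewrite <- Hw. unfold d in *. lra.
  - apply (Rmult_le_reg_r d); [lra|]. rewrite <- Hw. unfold d in *. lra.
Qed.

Lemma nondiv alpha k : 0 <= alpha < 1 -> irrational alpha ->
  forall n t, (0 < n < Z.of_nat (snd (cf_qpair alpha k)))%Z ->
  (n * snd (cf_ppair alpha k) <> t * Z.of_nat (snd (cf_qpair alpha k)))%Z.
Proof.
  intros Ha Hi n t Hn Ht.
  pose proof (cf_ident alpha Ha Hi k) as H. cbv zeta in H.
  destruct H as [_ [E2 _]].
  set (Q := Z.of_nat (snd (cf_qpair alpha k))) in *.
  set (Qm := Z.of_nat (fst (cf_qpair alpha k))) in *.
  set (P := snd (cf_ppair alpha k)) in *.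
  set (Pm := fst (cf_ppair alpha k)) in *.
  assert (Hs : (Q * Pm - P * Qm = 1 \/ Q * Pm - P * Qm = -1)%Z).
  { destruct (pow_m1 k) as [H|H]; rewrite H in E2; [left|right]; apply eq_IZR; rewrite E2; reflexivity. }
  assert (Hk : (n * (Q * Pm - P * Qm) = Q * (n * Pm - t * Qm))%Z).
  { rewrite Z.mul_sub_distr_l. replace (n * (P * Qm))%Z with (n * P * Qm)%Z by ring.
    rewrite Ht. ring. }
  set (z := (n * Pm - t * Qm)%Z) in *. clearbody z.
  destruct Hs as [Hs|Hs]; rewrite Hs in Hk; clear - Hk Hn; clearbody Q; (destruct (Z.le_gt_cases z (-1)); [nia|destruct (Z.le_gt_cases z 0); nia]).
Qed.

Theorem lemma3p6 :
  exists A0 C : R, 0 < A0 /\ 0 < C /\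
    forall alpha : R, 0 <= alpha < 1 -> irrational alpha ->
    forall K : nat, (1 <= K)%nat -> A0 <= INR (cf_a alpha K) ->
    forall b : nat, (b <= cf_a alpha K)%nat ->
      Rabs (S_N (b * cf_q alpha (K - 1)) saw alpha
            - (-1) ^ K * (INR b / 2) * (1 - INR b / INR (cf_a alpha K))) <= C.
Proof.
  exists 1, 2. split; [lra|split; [lra|]].
  intros alpha Ha Hi K HK HA b Hb.
  destruct K as [|k]; [lia|]. replace (S k - 1)%nat with k by lia.
  unfold S_N. rewrite RInt_saw, Rmult_0_r, Rminus_0_r.
  pose proof (cf_ident alpha Ha Hi k) as H. cbv zeta in H.
  destruct H as [E1 [E2 [E3 E4]]].
  pose proof (nondiv alpha k Ha Hi) as Hnd.
  destruct (a_props alpha k Ha Hi) as [Ha1 Hinv].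
  destruct (rem_props alpha Ha Hi k) as [[X0 X1] _].
  destruct (rem_props alpha Ha Hi (S k)) as [[X0' X1'] _].
  unfold cf_q.
  set (Q := snd (cf_qpair alpha k)) in *.
  set (Qm := fst (cf_qpair alpha k)) in *.
  set (P := snd (cf_ppair alpha k)) in *.
  set (Pm := fst (cf_ppair alpha k)) in *.
  set (a := cf_a alpha (S k)) in *.
  set (x := cf_rem alpha k) in *. set (x' := cf_rem alpha (S k)) in *.
  set (delta := INR Q * alpha - IZR P).
  set (M := (INR a + x') * INR Q + INR Qm).
  assert (Ext : x * (INR a + x') = 1) by (rewrite <- Hinv; field; lra).
  assert (HQ1 : 1 <= INR Q) by (apply (le_INR 1); lia).
  assert (HQm : 0 <= INR Qm <= INR Q) by (split; [apply pos_INR| apply le_INR; lia]).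
  assert (Ha1R : 1 <= INR a) by (apply (le_INR 1); lia).
  assert (HbR : 0 <= INR b <= INR a) by (split; [apply pos_INR| apply le_INR; lia]).
  assert (H1 : delta * (INR Q + x * INR Qm) = x * (-1)^k).
  { rewrite <- E2, minus_IZR, !mult_IZR, <- !INR_IZR_INZ. unfold delta.
    replace ((INR Q * alpha - IZR P) * (INR Q + x * INR Qm)) with
      (INR Q * (alpha * (INR Q + x * INR Qm)) - IZR P * (INR Q + x * INR Qm)) by ring.
    rewrite E1. ring. }
  assert (HM : M = (INR a + x') * (INR Q + x * INR Qm)).
  { replace ((INR a + x') * (INR Q + x * INR Qm)) with
      ((INR a + x') * INR Q + (x * (INR a + x')) * INR Qm) by ring.
    rewrite Ext. unfold M. ring. }
  assert (HdM : delta * M = (-1)^k).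
  { rewrite HM. replace (delta * ((INR a + x') * (INR Q + x * INR Qm))) with
      ((INR a + x') * (delta * (INR Q + x * INR Qm))) by ring.
    rewrite H1. replace ((INR a + x') * (x * (-1) ^ k)) with ((x * (INR a + x')) * (-1)^k) by ring.
    rewrite Ext. ring. }
  assert (HM0 : M > 0) by (unfold M; nra).
  assert (HbQ : INR b * INR Q < M) by (unfold M; nra).
  assert (Habs : Rabs delta * M = 1).
  { rewrite <- (Rabs_pos_eq M) by lra. rewrite <- Rabs_mult, HdM.
    destruct (pow_m1 k) as [Hs|Hs]; rewrite Hs; [apply Rabs_R1|rewrite Rabs_left by lra; ring]. }
  assert (Hcore : INR b * INR Q * Rabs delta < 1) by nra.
  rewrite (core alpha P Q b delta) by (auto; lia).
  change ((-1) ^ S k) with (-1 * (-1) ^ k).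
  destruct (pow_m1 k) as [Hs|Hs]; rewrite Hs in *.
  - assert (Hdel : delta = / M) by (apply (Rmult_eq_reg_r M); [rewrite HdM; field|]; lra).
    destruct (Rlt_dec delta 0) as [Hn|Hn].
    { exfalso. assert (/ M > 0) by (apply Rinv_0_lt_compat; lra). lra. }
    replace (delta * INR b * (INR b * INR Q + 1) / 2 - INR b / 2 + INR b * IZR 0 -
      -1 * 1 * (INR b / 2) * (1 - INR b / INR a)) with
      (INR b * (INR b * (INR a * INR Q - M) + INR a) / (2 * INR a * M)).
    2:{ rewrite Hdel. field. split; lra. }
    apply (final_bound (INR a) (INR b) (INR Q) (INR Qm) x' M); auto; lra.
  - assert (Hdel : delta = - / M) by (apply (Rmult_eq_reg_r M); [rewrite HdM; field|]; lra).
    destruct (Rlt_dec delta 0) as [Hn|Hn].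
    2:{ exfalso. assert (/ M > 0) by (apply Rinv_0_lt_compat; lra). lra. }
    replace (delta * INR b * (INR b * INR Q + 1) / 2 - INR b / 2 + INR b * IZR 1 -
      -1 * -1 * (INR b / 2) * (1 - INR b / INR a)) with
      (- (INR b * (INR b * (INR a * INR Q - M) + INR a) / (2 * INR a * M))).
    2:{ rewrite Hdel. field. split; lra. }
    rewrite Rabs_Ropp.
    apply (final_bound (INR a) (INR b) (INR Q) (INR Qm) x' M); auto; lra.
Qed.
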